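(* The linear map $C:\Lambda^\infty\mathbb V\to\Lambda^\infty\mathbb W$ defined by $C(|\lambda\rangle)=|\lambda'_*\rangle$ for every partition $\lambda$ (with conjugate partition $\lambda'$) is an isomorphism of $\mathcal U$-modules.
   Context: $\mathcal U=U_q(\mathfrak{sl}(\infty))$ is the $\mathbb Q(q)$-algebra generated by $E_a,F_a,K_{a,a+1}^{\pm1}$ ($a\in\mathbb Z$), the subalgebra generated by $E_a,F_a,K_{a,a+1}=K_aK_{a+1}^{-1}$ in the standard quantum group $U_q(\mathfrak{gl}(\infty))$ with generators $E_a,F_a,K_a^{\pm1}$. $\Lambda^\infty\mathbb V$ is the $\mathcal U$-module with basis $v_{a_1}\wedge v_{a_2}\wedge\cdots$ ($a_1>a_2>\cdots$ integers, $a_i=1-i$ for $i\gg0$) where, on a basis vector with index set $S=\{a_1,a_2,\dots\}$: $F_a$ replaces the index $a$ by $a+1$ if $a\in S$, $a+1\notin S$, and gives $0$ otherwise; $E_a$ replaces $a+1$ by $a$ if $a+1\in S$, $a\notin S$, and gives $0$ otherwise; $K_{a,a+1}$ acts by $q^{[a\in S]-[a+1\in S]}$. $\Lambda^\infty\mathbb W$ is the $\mathcal U$-module with basis $w_{b_1}\wedge w_{b_2}\wedge\cdots$ ($b_1<b_2<\cdots$, $b_i=i$ for $i\gg0$) where, for index set $S$: $F_a$ replaces $a+1$ by $a$ if $a+1\in S,a\notin S$ (else $0$); $E_a$ replaces $a$ by $a+1$ if $a\in S,a+1\notin S$ (else $0$); $K_{a,a+1}$ acts by $q^{[a+1\in S]-[a\in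 S]}$. (These are the semi-infinite $q$-wedge spaces of the natural module $\mathbb V$ and its dual $\mathbb W$.) For a partition $\lambda=(\lambda_1,\lambda_2,\dots)$ with conjugate $\lambda'$, $|\lambda\rangle=v_{\lambda_1}\wedge v_{\lambda_2-1}\wedge v_{\lambda_3-2}\wedge\cdots$ and $|\lambda'_*\rangle=w_{1-\lambda'_1}\wedge w_{2-\lambda'_2}\wedge w_{3-\lambda'_3}\wedge\cdots$. *)

(* Defs.v *)
From HB Require Import structures.
From mathcomp Require Import all_boot all_order all_algebra.
From mathcomp Require Import fraction finmap.
From mathcomp.multinomials Require Import monalg.
From Stdlib Require Import ClassicalEpsilon.

Set Implicit Arguments.
Unset Strict Implicit.
Unset Printing Implicit Defensive.

Import Order.TTheory GRing.Theory Num.Theory.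
Local Open Scope ring_scope.

Definition is_partition (s : seq nat) : bool :=
  sorted geq s && all (fun x => (0 < x)%N) s.

Record ptn := Partition { pval :> seq nat; pvalP : is_partition pval }.
HB.instance Definition _ := [isSub for pval].
HB.instance Definition _ := [Choice of ptn by <:].

(* lambda_i for i >= 1 (parts beyond the length are 0) *)
Definition part (l : ptn) (i : nat) : nat := nth 0%N (pval l) i.-1.

Definition conj_seq (s : seq nat) : seq nat :=
  [seq count (fun x => j <= x)%N s | j <- iota 1 (foldr maxn 0%N s)].

Lemma conj_seq_partition (s : seq nat) : is_partition (conj_seq s).
Proof.
apply/andP; split.
  apply: (@homo_sorted _ _ _ ltn) ; last exact: iota_ltn_sorted.
  move=> x y /ltnW lexy /=.
  by apply: sub_count => z /= /(leq_trans lexy).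
apply/allP => c /mapP [j]; rewrite mem_iota => /andP [j1 jm] ->.
rewrite -has_count; rewrite add1n ltnS in jm.
elim: s jm => [|x s IH] /=; first by rewrite leqn0 => /eqP j0; rewrite j0 in j1.
by rewrite leq_max => /orP [->//|/IH ->]; rewrite orbT.
Qed.

Definition conj_part (l : ptn) : ptn :=
  Partition (conj_seq_partition (pval l)).

Definition Qq := {fraction {poly rat}}.
Definition q : Qq := @FracField.tofrac {poly rat} 'X.

Definition LV := {malg Qq[ptn]}.
Definition LW := {malg Qq[ptn]}.
HB.instance Definition _ := GRing.Lmodule.copy LV {malg Qq[ptn]}.
HB.instance Definition _ := GRing.Lmodule.copy LW {malg Qq[ptn]}.

Definition lext (M : lmodType Qq) (h : ptn -> M)
  (v : {malg Qq[ptn]}) : M :=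
  \sum_(k <- msupp v) v@_k *: h k.

(* The basis vector v_{a_1} /\ v_{a_2} /\ ... of Lambda^infty V
   (a_1 > a_2 > ..., a_i = 1 - i for i >> 0) is |lambda> with
   a_i = lambda_i - i + 1; the basis vector w_{b_1} /\ w_{b_2} /\ ... of
   Lambda^infty W (b_1 < b_2 < ..., b_i = i for i >> 0) is |mu_*> with
   b_i = i - mu_i.  These are bijections onto the sets of basis indices. *)
Definition memV (l : ptn) (a : int) : Prop :=
  exists i : nat, (0 < i)%N /\ a = (part l i)%:Z - i%:Z + 1.
Definition memW (m : ptn) (b : int) : Prop :=
  exists i : nat, (0 < i)%N /\ b = i%:Z - (part m i)%:Z.

Definition ketV (l : ptn) : LV := << l >>.
Definition ketW (m : ptn) : LW := << m >>.

Definition pif (T : Type) (P : Prop) (x y : T) : T :=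
  if excluded_middle_informative P then x else y.
Definition ind (P : Prop) : int := pif P 1 0.

(* the basis vector whose index set is T (0 if T is not an index set;
   this never happens in the uses below) *)
Definition pick_part (P : ptn -> Prop) : option ptn :=
  match excluded_middle_informative (exists m, P m) with
  | left H => Some (proj1_sig (constructive_indefinite_description _ H))
  | right _ => None
  end.
Definition vecV (T : int -> Prop) : LV :=
  match pick_part (fun m => forall x, memV m x <-> T x) with
  | Some m => ketV m | None => 0 end.
Definition vecW (T : int -> Prop) : LW :=
  match pick_part (fun m => forall x, memW m x <-> T x) with
  | Some m => ketW m | None => 0 end.

(* Generators of U = U_q(sl(infty)) : E_a, F_a, K_{a,a+1}, K_{a,a+1}^{-1} *)
Inductive gen := GE of int | GF of int | GK of int | GKinv of int.

Definition actV_basis (g : gen) (l : ptn) : LV :=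
  match g with
  | GF a => pif (memV l a /\ ~ memV l (a + 1))
              (vecV (fun x => (memV l x /\ x <> a) \/ x = a + 1)) 0
  | GE a => pif (memV l (a + 1) /\ ~ memV l a)
              (vecV (fun x => (memV l x /\ x <> a + 1) \/ x = a)) 0
  | GK a => (q ^ (ind (memV l a) - ind (memV l (a + 1)))) *: ketV l
  | GKinv a => (q ^ (- (ind (memV l a) - ind (memV l (a + 1))))) *: ketV l
  end.

Definition actW_basis (g : gen) (m : ptn) : LW :=
  match g with
  | GF a => pif (memW m (a + 1) /\ ~ memW m a)
              (vecW (fun x => (memW m x /\ x <> a + 1) \/ x = a)) 0
  | GE a => pif (memW m a /\ ~ memW m (a + 1))
              (vecW (fun x => (memW m x /\ x <> a) \/ x = a + 1)) 0
  | GK a => (q ^ (ind (memW m (a + 1)) - ind (memW m a))) *: ketW m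
  | GKinv a => (q ^ (- (ind (memW m (a + 1)) - ind (memW m a)))) *: ketW m
  end.

Definition actV (g : gen) (v : LV) : LV := lext (actV_basis g) v.
Definition actW (g : gen) (w : LW) : LW := lext (actW_basis g) w.

Definition Cmap (v : LV) : LW := lext (fun l => ketW (conj_part l)) v.

(* Main.v *)
Require Import Defs.
From HB Require Import structures.
From mathcomp Require Import all_boot all_order all_algebra.
From mathcomp.multinomials Require Import monalg.
From mathcomp Require Import finmap zify.
From Stdlib Require Import Classical ClassicalEpsilon.
Set Implicit Arguments. Unset Strict Implicit.
Import Order.TTheory GRing.Theory Num.Theory.

Local Open Scope ring_scope.
Section Lext.
Variable M : lmodType Qq.
Variable h : ptn -> M.

Lemma lextEw (d : {fset ptn}) (v : {malg Qq[ptn]}) : (msupp v `<=` d)%fset ->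
  lext h v = \sum_(k <- d) v@_k *: h k.
Proof.
move=> le; rewrite /lext [LHS](big_fset_incl _ le) => //= x xd /mcoeff_outdom ->.
by rewrite scale0r.
Qed.

Lemma lextU (l : ptn) : lext h << l >> = h l.
Proof. by rewrite (lextEw msuppU_le) big_seq_fset1 mcoeffUU scale1r. Qed.

Lemma lext_lin (a : Qq) (u v : {malg Qq[ptn]}) :
  lext h (a *: u + v) = a *: lext h u + lext h v.
Proof.
pose d := (msupp u `|` msupp v)%fset.
have hu : (msupp u `<=` d)%fset by apply: fsubsetUl.
have hv : (msupp v `<=` d)%fset by apply: fsubsetUr.
have huv : (msupp (a *: u + v) `<=` d)%fset.
  apply: fsubset_trans (msuppD_le _ _) _; apply/fsetUSS => //.
  exact: fsubset_trans (msuppZ_le _ _) _.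
rewrite (lextEw huv) (lextEw hu) (lextEw hv) scaler_sumr -big_split /=.
apply: eq_bigr => k _; by rewrite mcoeffD mcoeffZ scalerDl scalerA.
Qed.
End Lext.

Lemma lext_comp (M N : lmodType Qq) (f : M -> N) (h : ptn -> M) v :
  (forall a x y, f (a *: x + y) = a *: f x + f y) ->
  f (lext h v) = lext (fun k => f (h k)) v.
Proof.
move=> lf.
have f0 : f 0 = 0.
  have e := lf 1 0 0; rewrite scaler0 add0r scale1r in e.
  by apply: (@addrI _ (f 0)); rewrite addr0 -e.
rewrite /lext; elim: (enum_fset (msupp v)) => [|k s IH]; first by rewrite !big_nil.
by rewrite !big_cons lf IH.
Qed.

Lemma lext_id v : lext (fun k => << k >> : {malg Qq[ptn]}) v = v.
Proof.
rewrite [RHS]monalgE /lext; apply: eq_bigr => k _.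
apply/malgP => k'; by rewrite mcoeffZ !mcoeffU mulr_natr.
Qed.
Local Close Scope ring_scope.
Lemma geq_transitive : transitive geq.
Proof. by move=> a b c h1 h2; exact: leq_trans h2 h1. Qed.

Lemma key (s : seq nat) : sorted geq s -> forall i j, 0 < i -> 0 < j ->
  (j <= nth 0 s i.-1) = (i <= count (fun x => j <= x) s).
Proof.
elim: s => [|y s IH] srt i j i0 j0.
  by rewrite nth_nil /=; case: i i0 => //; case: j j0.
have hs : sorted geq s := path_sorted srt.
have ally : all (fun x => x <= y) s := order_path_min geq_transitive srt.
have c0 : j > y -> count (fun x => j <= x) s = 0.
  move=> h; apply/eqP; rewrite -leqn0 leqNgt -has_count; apply/hasPn => x /(allP ally) xy.
  by rewrite -ltnNge; exact: leq_ltn_trans xy h.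
have ny : forall k, nth 0 s k <= y.
  move=> k; case: (ltnP k (size s)) => hk; first exact: (allP ally) _ (mem_nth 0 hk).
  by rewrite nth_default.
case: i i0 => [//|[|k]] _ /=; case: (leqP j y) => h.
- by rewrite add1n.
- by rewrite c0.
- by rewrite add1n ltnS -(IH hs k.+1 j).
- rewrite c0 // add0n ltn0; apply/negbTE; rewrite -ltnNge.
  exact: leq_ltn_trans (ny k) h.
Qed.

Lemma ptn_sorted (l : ptn) : sorted geq l.
Proof. by case/andP: (pvalP l). Qed.

Lemma pos_nth (l : ptn) i : i < size l -> 0 < nth 0 l i.
Proof. by move=> h; case/andP: (pvalP l) => _ /allP; apply; exact: mem_nth. Qed.

Lemma le_foldr (s : seq nat) x : x \in s -> x <= foldr maxn 0 s.
Proof.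
elim: s => //= y s IH; rewrite in_cons => /orP[/eqP->|/IH h].
  exact: leq_maxl.
exact: leq_trans h (leq_maxr _ _).
Qed.

Lemma part_conj (l : ptn) j : 0 < j -> part (conj_part l) j = count (fun x => j <= x) l.
Proof.
move=> j0; rewrite /part /= /conj_seq.
case: (ltnP j.-1 (foldr maxn 0 l)) => h.
  by rewrite (nth_map 0) ?size_iota // nth_iota // add1n prednK.
rewrite nth_default ?size_map ?size_iota //.
apply/esym/eqP; rewrite -leqn0 leqNgt -has_count; apply/hasPn => x /le_foldr xm.
rewrite -ltnNge; apply: leq_ltn_trans xm _; by rewrite -(prednK j0) ltnS.
Qed.

Lemma R (l : ptn) i j : 0 < i -> 0 < j ->
  (j <= part l i) = (i <= part (conj_part l) j).
Proof. by move=> i0 j0; rewrite part_conj // /part key // ptn_sorted. Qed.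

Lemma ptn_eq (l l' : ptn) : (forall i, 0 < i -> part l i = part l' i) -> l = l'.
Proof.
move=> H; apply: val_inj => /=.
have Hn : forall i, nth 0 l i = nth 0 l' i by move=> i; exact: (H i.+1).
have sz : size l = size l'.
  apply/eqP; rewrite eqn_leq; apply/andP; split; rewrite leqNgt; apply/negP => lt.
    by have := pos_nth lt; rewrite Hn nth_default.
  by have := pos_nth lt; rewrite -Hn nth_default.
by apply: (eq_from_nth (x0 := 0)) => // i _; exact: Hn.
Qed.

Lemma part_mono (l : ptn) i k : 0 < i -> i <= k -> part l k <= part l i.
Proof.
move=> i0 ik; case E: (part l k) => [//|j].
have k0 : 0 < k by exact: leq_trans ik.
have := R l k0 (ltn0Sn j); rewrite E leqnn => /esym h.
by rewrite R // (leq_trans ik h).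
Qed.

Lemma leq_ext a b : (forall j, 0 < j -> (j <= a) = (j <= b)) -> a = b.
Proof.
move=> H; apply/eqP; rewrite eqn_leq; apply/andP; split.
  by case: a H => [//|a] H; rewrite -H.
by case: b H => [//|b] H; rewrite H.
Qed.

Lemma conjK (l : ptn) : conj_part (conj_part l) = l.
Proof.
apply: ptn_eq => i i0; apply: leq_ext => j j0.
by rewrite (R l) // -(R (conj_part l)).
Qed.

Local Open Scope ring_scope.

Lemma compl (l : ptn) x : memW (conj_part l) x <-> ~ memV l x.
Proof.
split.
  move=> [j [j0 ->]] [i [i0 e]].
  have := R l i0 j0; case: (leqP j (part l i)) => h /esym h'; lia.
move=> nV.
have exP : exists i, (0 < i)%N && ((part l i)%:Z - i%:Z + 1 <= x).
  exists (size l + `|x| + 1)%N.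
  rewrite /part nth_default; last by lia.
  apply/andP; split; lia.
case: (ex_minnP exP) => i /andP [i0 hi] imin.
have hlt : (part l i)%:Z - i%:Z + 1 < x.
  rewrite lt_neqAle hi andbT; apply/negP => /eqP e; apply: nV; by exists i.
have hprev : (1 < i)%N -> x < (part l i.-1)%:Z - (i.-1)%:Z + 1.
  move=> i1; rewrite ltNge; apply/negP => h.
  have := imin i.-1; rewrite h andbT; lia.
pose j : nat := absz (x + i%:Z - 1)%R.
have ej : j%:Z = x + i%:Z - 1 by rewrite /j; lia.
have j0 : (0 < j)%N by lia.
exists j; split => //.
have h1 : (part (conj_part l) j < i)%N.
  rewrite ltnNge -R //; lia.
have h2 : (i.-1 <= part (conj_part l) j)%N.
  case: (ltnP 1 i) => i1; last by lia.
  rewrite -R; [|lia|done]. have := hprev i1; lia.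
lia.
Qed.

Lemma memV_inj_aux (l l' : ptn) i :
  (forall x, memV l x -> memV l' x) ->
  (forall k, (0 < k)%N -> (k < i)%N -> part l k = part l' k) -> (0 < i)%N ->
  ~ ((part l' i)%:Z - i%:Z + 1 < (part l i)%:Z - i%:Z + 1).
Proof.
move=> H IH i0 lt.
have [k [k0 e]] : memV l' ((part l i)%:Z - i%:Z + 1) by apply: H; exists i.
have ki : (k < i)%N.
  rewrite ltnNge; apply/negP => ik.
  have := part_mono l' i0 ik; lia.
have := part_mono l k0 (ltnW ki); rewrite (IH k) //; lia.
Qed.

Lemma memV_inj (l l' : ptn) : (forall x, memV l x <-> memV l' x) -> l = l'.
Proof.
move=> H; apply: ptn_eq => i; elim/ltn_ind: i => i IH i0.
have h1 := @memV_inj_aux l l' i (fun x => proj1 (H x)) (fun k k0 ki => IH k ki k0) i0.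
have h2 := @memV_inj_aux l' l i (fun x => proj2 (H x))
   (fun k k0 ki => esym (IH k ki k0)) i0.
lia.
Qed.

Lemma lext_ext (M : lmodType Qq) (h h' : ptn -> M) v :
  (forall k, h k = h' k) -> lext h v = lext h' v.
Proof. by move=> H; rewrite /lext; apply: eq_bigr => k _; rewrite H. Qed.

Lemma lext0 (M : lmodType Qq) (h : ptn -> M) : lext h 0 = 0.
Proof. by rewrite /lext msupp0 big_seq_fset0. Qed.

Lemma Cmap_lin a u v : Cmap (a *: u + v) = a *: Cmap u + Cmap v.
Proof. exact: lext_lin. Qed.

Lemma Cmap0 : Cmap 0 = 0.
Proof. exact: lext0. Qed.

Lemma CmapZ a u : Cmap (a *: u) = a *: Cmap u.
Proof. by have := Cmap_lin a u 0; rewrite !addr0 Cmap0 addr0. Qed.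

Lemma CmapU l : Cmap (ketV l) = ketW (conj_part l).
Proof. exact: lextU. Qed.

Lemma memW_conj (m : ptn) x : memW m x <-> ~ memV (conj_part m) x.
Proof. by rewrite -{1}(conjK m); apply: compl. Qed.

Lemma memW_inj (m m' : ptn) : (forall x, memW m x <-> memW m' x) -> m = m'.
Proof.
move=> H; rewrite -(conjK m) -(conjK m'); congr conj_part.
apply: memV_inj => x; have := H x; rewrite !memW_conj.
by case: (classic (memV (conj_part m) x)); case: (classic (memV (conj_part m') x)); tauto.
Qed.

Lemma vec_compl (T1 T2 : int -> Prop) : (forall x, T2 x <-> ~ T1 x) ->
  Cmap (vecV T1) = vecW T2.
Proof.
move=> H; rewrite /vecV /vecW /pick_part.
case: excluded_middle_informative => [e1|n1];
  case: excluded_middle_informative => [e2|n2].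
- case: (constructive_indefinite_description _ e1) => m /= Hm.
  case: (constructive_indefinite_description _ e2) => m' /= Hm'.
  rewrite CmapU; congr ketW; apply: memW_inj => x.
  rewrite Hm' H compl Hm; tauto.
- case: (constructive_indefinite_description _ e1) => m /= Hm.
  exfalso; apply: n2; exists (conj_part m) => x; rewrite H compl Hm; tauto.
- case: (constructive_indefinite_description _ e2) => m' /= Hm'.
  exfalso; apply: n1; exists (conj_part m') => x.
  have := Hm' x; rewrite memW_conj H.
  by case: (classic (T1 x)); case: (classic (memV (conj_part m') x)); tauto.
- exact: Cmap0.
Qed.

Lemma ind_compl (l : ptn) x : ind (memW (conj_part l) x) = 1 - ind (memV l x).
Proof.
rewrite /ind /pif; case: excluded_middle_informative => h1;
  case: excluded_middle_informative => h2 //.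
- by exfalso; move/compl: h1; tauto.
- by exfalso; apply: h1; apply/compl.
Qed.

Lemma Kexp (l : ptn) a :
  ind (memW (conj_part l) (a + 1)) - ind (memW (conj_part l) a) =
  ind (memV l a) - ind (memV l (a + 1)).
Proof. rewrite !ind_compl; lia. Qed.

Lemma basis_comm g l : Cmap (actV_basis g l) = actW_basis g (conj_part l).
Proof.
case: g => a /=.
-
  rewrite /pif; case: excluded_middle_informative => c1;
    case: excluded_middle_informative => c2.
  + apply: vec_compl => x; rewrite compl.
    have naa : a <> a + 1 by lia.
    have naa' : a + 1 <> a by lia.
    case: (eqVneq x a) => [->|/eqP xa].
      by case: (classic (memV l a)); tauto.
    case: (eqVneq x (a + 1)) => [->|/eqP xa1].
      by case: (classic (memV l (a + 1))); tauto.
    by case: (classic (memV l x)); tauto.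
  + exfalso; apply: c2; rewrite !compl; tauto.
  + exfalso; apply: c1; move: c2; rewrite !compl => -[h1 h2].
    split => //; exact: NNPP.
  + exact: Cmap0.
-
  rewrite /pif; case: excluded_middle_informative => c1;
    case: excluded_middle_informative => c2.
  + apply: vec_compl => x; rewrite compl.
    have naa : a <> a + 1 by lia.
    have naa' : a + 1 <> a by lia.
    case: (eqVneq x a) => [->|/eqP xa].
      by case: (classic (memV l a)); tauto.
    case: (eqVneq x (a + 1)) => [->|/eqP xa1].
      by case: (classic (memV l (a + 1))); tauto.
    by case: (classic (memV l x)); tauto.
  + exfalso; apply: c2; rewrite !compl; tauto.
  + exfalso; apply: c1; move: c2; rewrite !compl => -[h1 h2].
    split => //; exact: NNPP.
  + exact: Cmap0.
- by rewrite CmapZ CmapU Kexp.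
- by rewrite CmapZ CmapU Kexp.
Qed.

Theorem theorem6p3 :
  (forall l : ptn, Cmap (ketV l) = ketW (conj_part l)) /\
  linear Cmap /\
  bijective Cmap /\
  (forall (g : gen) (v : LV), Cmap (actV g v) = actW g (Cmap v)).
Proof.
split; first exact: CmapU.
split; first by move=> a u v; exact: Cmap_lin.
split.
  pose Dmap (w : LW) : LV := lext (fun m => ketV (conj_part m)) w.
  have Dlin : forall a x y, Dmap (a *: x + y) = a *: Dmap x + Dmap y.
    by move=> a x y; exact: lext_lin.
  exists Dmap => v.
  - rewrite /Cmap (lext_comp _ _ Dlin).
    rewrite (lext_ext _ (h' := fun k => << k >>)) ?lext_id // => k.
    by rewrite /Dmap lextU conjK.
  - rewrite /Dmap (lext_comp _ _ Cmap_lin).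
    rewrite (lext_ext _ (h' := fun k => << k >>)) ?lext_id // => k.
    by rewrite CmapU conjK.
move=> g v; rewrite /actV (lext_comp _ _ Cmap_lin).
rewrite (lext_comp (f := actW g)); last by move=> a x y; exact: lext_lin.
apply: lext_ext => k; rewrite basis_comm /actW lextU //.
Qed.
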